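(* For every $\varepsilon\in(0,1/2)$ there exist $\delta=\delta_\varepsilon>0$ and an integer $N_{\varepsilon,\delta}$ such that for every integer $N\ge N_{\varepsilon,\delta}$ there is a set $\mathcal E(N)\subset\{0,1\}^N$ with $\#\mathcal E(N)\le \varepsilon\, 2^N$ such that for every $\mathfrak u\in\{0,1\}^N\setminus\mathcal E(N)$ and every integer $0\le k\le\lfloor\delta N\rfloor$ one has $R_{\mathfrak w}(k)\in[1/2-\varepsilon,1/2+\varepsilon]$ and $R_{\mathfrak e}(k)\in[1/2-\varepsilon,1/2+\varepsilon]$, where these proportions are computed in the P-G triangle of side $N$ generated by $\mathfrak u$.
   Context: For $\mathfrak u=(a_0,\dots,a_{N-1})\in\{0,1\}^N$, the P-G triangle of side $N$ generated by $\mathfrak u$ consists of the numbers $d_i^{(j)}\in\{0,1\}$, $j\ge0$, $0\le i\le N-1-j$, with $d_i^{(0)}=a_i$ and $d_i^{(j+1)}=|d_{i+1}^{(j)}-d_i^{(j)}|$. For $0\le k\le N-1$, the western ray $\mathfrak w_k$ is the sequence $(d_k^{(j)})_{0\le j\le N-1-k}$ and the eastern ray $\mathfrak e_k$ is the sequence $(d_{N-1-k-j}^{(j)})_{0\le j\le N-1-k}$, each of length $N-k$. $R_{\mathfrak w}(k)=\frac{1}{N-k}\#\{0\le j\le N-1-k: d_k^{(j)}=1\}$ and $R_{\mathfrak e}(k)=\frac{1}{N-k}\#\{0\le j\le N-1-k: d_{N-1-k-j}^{(j)}=1\}$ are the proportions of ones on $\mathfrak w_k$ and $\mathfrak e_k$.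 *)

(* Defs.v *)
From mathcomp Require Import all_boot all_order all_algebra.
From mathcomp Require Import reals.
Set Implicit Arguments. Unset Strict Implicit. Unset Printing Implicit Defensive.
Import Order.TTheory GRing.Theory Num.Theory.

(* Steinhaus / Pascal-Gauss (P-G) triangle generated by u in {0,1}^N, booleans
   encode {0,1} (true = 1).  pg u j i = d_i^{(j)}; the recursion
   d_i^{(j+1)} = |d_{i+1}^{(j)} - d_i^{(j)}| is xor on {0,1}.
   Values outside the triangle (i > N-1-j) are irrelevant; only the
   entries inside the triangle are used below. *)
Fixpoint pg (N : nat) (u : {ffun 'I_N -> bool}) (j i : nat) : bool :=
  match j with
  | 0 => if insub i is Some i' then u i' else false
  | j'.+1 => xorb (pg u j' i.+1) (pg u j' i)
  end.

Definition west_ones (N : nat) (u : {ffun 'I_N -> bool}) (k : nat) : nat :=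
  \sum_(0 <= j < N - k) (pg u j k : nat).

Definition east_ones (N : nat) (u : {ffun 'I_N -> bool}) (k : nat) : nat :=
  \sum_(0 <= j < N - k) (pg u j (N - 1 - k - j) : nat).

Local Open Scope ring_scope.

Definition R_west (R : realType) (N : nat) (u : {ffun 'I_N -> bool}) (k : nat) : R :=
  (west_ones u k)%:R / (N - k)%:R.
Definition R_east (R : realType) (N : nat) (u : {ffun 'I_N -> bool}) (k : nat) : R :=
  (east_ones u k)%:R / (N - k)%:R.

(* Main.v *)
Require Import Defs.
From mathcomp Require Import all_boot all_order all_algebra.
From mathcomp Require Import reals.
From mathcomp Require Import lra zify.
Import Order.TTheory GRing.Theory Num.Theory.
Set Implicit Arguments. Unset Strict Implicit. Unset Printing Implicit Defensive.

Definition flip N (p : 'I_N) (u : {ffun 'I_N -> bool}) : {ffun 'I_N -> bool} :=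
  [ffun i => xorb (u i) (i == p)].
Definition dlt N (p : 'I_N) : {ffun 'I_N -> bool} := [ffun i => i == p].

Lemma flipK N (p : 'I_N) : involutive (flip p).
Proof. by move=> u; apply/ffunP => i; rewrite !ffunE; case: (u i); case: (i == p). Qed.

Lemma pg_flip N (p : 'I_N) u j i :
  pg (flip p u) j i = xorb (pg u j i) (pg (dlt p) j i).
Proof.
elim: j i => [|j IH] i /=.
  by case: insubP => [i' _ _|_] //; rewrite !ffunE.
rewrite !IH.
move: (pg u j i.+1) (pg (dlt p) j i.+1) (pg u j i) (pg (dlt p) j i) => a b c d.
by case: a; case: b; case: c; case: d.
Qed.

Lemma pg_lo N (p : 'I_N) j i : (i + j < p)%N -> pg (dlt p) j i = false.
Proof.
elim: j i => [|j IH] i /=.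
  case: insubP => [i' _ <-|_] // H; rewrite ffunE.
  by apply/negbTE/eqP => e; move: H; rewrite e addn0 ltnn.
by move=> H; rewrite !IH //; lia.
Qed.

Lemma pg_hi N (p : 'I_N) j i : (p < i)%N -> pg (dlt p) j i = false.
Proof.
elim: j i => [|j IH] i /=.
  case: insubP => [i' _ <-|_] // H; rewrite ffunE.
  by apply/negbTE/eqP => e; move: H; rewrite e ltnn.
by move=> H; rewrite !IH //; lia.
Qed.

Lemma pg_eq1 N (p : 'I_N) j i : (i + j = p)%N -> pg (dlt p) j i = true.
Proof.
elim: j i => [|j IH] i /=.
  rewrite addn0 => e; case: insubP => [i' _ e'|].
    by rewrite ffunE; apply/eqP/val_inj; rewrite /= e' e.
  by rewrite e ltn_ord.
by move=> H; rewrite IH ?pg_lo //; lia.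
Qed.

Lemma pg_eq2 N (p : 'I_N) j (i : nat) : i = val p -> pg (dlt p) j i = true.
Proof.
elim: j i => [|j IH] i /=.
  move=> e; case: insubP => [i' _ e'|].
    by rewrite ffunE; apply/eqP/val_inj; rewrite /= e' e.
  by rewrite e ltn_ord.
by move=> H; rewrite (IH i) // pg_hi //; lia.
Qed.
Local Open Scope ring_scope.

Definition sg (R : realType) (b : bool) : R := if b then 1 else -1.

Lemma sm (R : realType) N L (x : nat -> {ffun 'I_N -> bool} -> bool) (pos : nat -> 'I_N) :
 (forall j u, (j < L)%N -> x j (flip (pos j) u) = ~~ x j u) ->
 (forall j j' u, (j' < j)%N -> (j < L)%N -> x j' (flip (pos j) u) = x j' u) ->
 \sum_u (\sum_(0 <= j < L) sg R (x j u)) ^+ 2 = L%:R * 2 ^+ N.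
Proof.
move=> Hf Hn.
have T0 : forall j j', (j' < j < L)%N -> \sum_u sg R (x j u) * sg R (x j' u) = 0.
  move=> j j' /andP[jj jL].
  set T := (X in X = 0).
  have : T = - T.
    rewrite {1}/T (reindex_inj (can_inj (flipK (pos j)))) /T -sumrN.
    apply: eq_bigr => u _; rewrite Hf // Hn //.
    by case: (x j u); case: (x j' u); rewrite /sg /=; lra.
  lra.
have T1 : forall j j', (j < L)%N -> (j' < L)%N ->
    \sum_u sg R (x j u) * sg R (x j' u) = (j == j')%:R * 2 ^+ N.
  move=> j j' jL j'L; case: (ltngtP j j') => [lt|gt|<-].
  - rewrite mul0r.
    under eq_bigr do rewrite mulrC.
    by rewrite T0 ?lt ?j'L.
  - by rewrite mul0r T0 ?gt ?jL.
  rewrite mul1r.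
  under eq_bigr => u _ do have -> : sg R (x j u) * sg R (x j u) = 1
    by case: (x j u); rewrite /sg /=; lra.
  by rewrite sumr_const card_ffun card_bool card_ord -natrX.
under eq_bigr => u _ do rewrite expr2 big_distrlr /=.
rewrite exchange_big /=.
rewrite big_nat [RHS](_ : _ = \sum_(0 <= j < L) 2 ^+ N); last first.
  by rewrite sumr_const_nat subn0 mulr_natl.
rewrite big_nat; apply: eq_bigr => j /= jL.
rewrite exchange_big /=.
rewrite big_nat (eq_bigr (fun j' => (j == j')%:R * 2 ^+ N)); last first.
  by move=> j' /= j'L; rewrite T1.
rewrite -big_nat big_mkord (bigD1 (Ordinal jL)) //= eqxx mul1r big1 ?addr0 //.
move=> j' /negbTE ne; rewrite eq_sym.
have -> : (nat_of_ord j' == j) = false by exact: ne.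
by rewrite mul0r.
Qed.

Definition Sw (R : realType) N (u : {ffun 'I_N -> bool}) k : R :=
  \sum_(0 <= j < N - k) sg R (pg u j k).
Definition Se (R : realType) N (u : {ffun 'I_N -> bool}) k : R :=
  \sum_(0 <= j < N - k) sg R (pg u j (N - 1 - k - j)).

Lemma sg_sum (R : realType) (b : nat -> bool) L :
  \sum_(0 <= j < L) sg R (b j) = 2 * (\sum_(0 <= j < L) (b j : nat))%:R - L%:R.
Proof.
elim: L => [|L IH]; first by rewrite !big_geq // mulr0 subr0.
rewrite !big_nat_recr //= IH natrD -addn1 natrD /sg.
by case: (b L) => /=; lra.
Qed.

Lemma Sw_eq (R : realType) N (u : {ffun 'I_N -> bool}) k : Sw R u k = 2 * (west_ones u k)%:R - (N - k)%:R.
Proof. by rewrite /Sw sg_sum. Qed.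
Lemma Se_eq (R : realType) N (u : {ffun 'I_N -> bool}) k : Se R u k = 2 * (east_ones u k)%:R - (N - k)%:R.
Proof. by rewrite /Se sg_sum. Qed.

Lemma west_sm (R : realType) N k : (k < N)%N ->
  \sum_(u : {ffun 'I_N -> bool}) (Sw R u k) ^+ 2 = (N - k)%:R * 2 ^+ N.
Proof.
move=> kN; rewrite /Sw /Se; apply: (@sm R N (N - k) (fun j u => pg u j k) (fun j => insubd (Ordinal kN) (k + j))).
- move=> j u jL; rewrite pg_flip pg_eq1; first by case: pg.
  by rewrite insubdK // unfold_in /=; lia.
- move=> j j' u jj jL; rewrite pg_flip pg_lo; first by case: pg.
  rewrite insubdK //; [lia | rewrite unfold_in /=; lia].
Qed.

Lemma east_sm (R : realType) N k : (k < N)%N ->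
  \sum_(u : {ffun 'I_N -> bool}) (Se R u k) ^+ 2 = (N - k)%:R * 2 ^+ N.
Proof.
move=> kN; rewrite /Se; apply: (@sm R N (N - k) (fun j u => pg u j (N - 1 - k - j)%N)
   (fun j => insubd (Ordinal kN) (N - 1 - k - j)%N)).
- move=> j u jL; rewrite pg_flip pg_eq2; first by case: pg.
  by rewrite insubdK //; rewrite unfold_in /=; lia.
- move=> j j' u jj jL; rewrite pg_flip pg_hi; first by case: pg.
  rewrite insubdK //; [lia | rewrite unfold_in /=; lia].
Qed.

Lemma in_range (R : realType) (w L eps : R) : 0 < L -> `|2 * w - L| <= 2 * eps * L ->
  1 / 2 - eps <= w / L <= 1 / 2 + eps.
Proof.
move=> L0; rewrite ler_norml => /andP[h1 h2].
by rewrite ler_pdivlMr // ler_pdivrMr //; apply/andP; split; nra.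
Qed.

Lemma indic (R : realType) (c S : R) : 0 < c -> c < `|S| -> 1 <= S ^+ 2 / c ^+ 2.
Proof.
move=> c0 cS; rewrite ler_pdivlMr ?exprn_gt0 // mul1r -(real_normK (num_real S)); nra.
Qed.

Lemma cnt (R : realType) (D : R) N : 0 <= D ->
  \sum_(k < N) (if k%:R <= D then 1 else 0 : R) <= N%:R /\
  \sum_(k < N) (if k%:R <= D then 1 else 0 : R) <= D + 1.
Proof.
move=> D0; elim: N => [|N [IH1 IH2]]; first by rewrite big_ord0; split; lra.
rewrite big_ord_recr /= -addn1 natrD; case: ifP => h; split; lra.
Qed.
Unset Implicit Arguments. Set Strict Implicit.

Theorem theorem2p5 (R : realType) (eps : R) :
  0 < eps -> eps < 1 / 2 ->
  exists delta : R, 0 < delta /\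
  exists N0 : nat, forall N : nat, (N0 <= N)%N ->
  exists E : {set {ffun 'I_N -> bool}},
    (#|E|%:R <= eps * 2 ^+ N) /\
    forall u : {ffun 'I_N -> bool}, u \notin E ->
    forall k : nat, (k < N)%N -> (k%:R <= delta * N%:R) ->
      (1 / 2 - eps <= R_west R u k <= 1 / 2 + eps) /\
      (1 / 2 - eps <= R_east R u k <= 1 / 2 + eps).
Proof.
move=> e0 e1.
have e3 : 0 < eps ^+ 3 by rewrite exprn_gt0.
have e3s : eps ^+ 3 <= eps / 4.
  rewrite !exprS expr0 mulr1; nra.
exists (eps ^+ 3 / 2); split; first lra.
have [M HM] : exists M : nat, 2 / eps ^+ 3 <= M%:R.
  exists (Num.Def.archi_bound (2 / eps ^+ 3)); apply: ltW; apply: archi_boundP.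
  by rewrite divr_ge0 // ltW.
exists M.+1 => N HN.
set d := eps ^+ 3 / 2.
have N0 : 0 < N%:R :> R by rewrite ltr0n; lia.
have NM : 2 / eps ^+ 3 <= N%:R :> R.
  by apply: (le_trans HM); rewrite ler_nat; lia.
pose c k : R := 2 * eps * (N - k)%:R.
pose bad k (u : {ffun 'I_N -> bool}) := (c k < `|Sw R u k|) || (c k < `|Se R u k|).
exists [set u | [exists k : 'I_N, (k%:R <= d * N%:R) && bad k u]].
split; last first.
  move=> u; rewrite inE negb_exists => /forallP H k kN kd.
  have := H (Ordinal kN); rewrite /= kd /= negb_or => /andP[h1 h2].
  rewrite -leNgt in h1; rewrite -leNgt in h2.
  have L0 : 0 < (N - k)%:R :> R by rewrite ltr0n; lia.
  split; apply: in_range => //; [rewrite -Sw_eq | rewrite -Se_eq] => //.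
set E := [set u | _].
have c0 : forall k, (k < N)%N -> 0 < c k.
  by move=> k kN; rewrite /c !mulr_gt0 // ltr0n; lia.
have key : forall u, (u \in E)%:R <= \sum_(k < N | k%:R <= d * N%:R)
    ((Sw R u k) ^+ 2 + (Se R u k) ^+ 2) / (c k) ^+ 2.
  move=> u; case: (boolP (u \in E)) => [|_]; last first.
    by rewrite sumr_ge0 // => k _; rewrite divr_ge0 ?addr_ge0 ?sqr_ge0.
  rewrite inE => /existsP[k /andP[kd bk]]; rewrite (bigD1 k) //=.
  have r0 : 0 <= \sum_(i < N | (i%:R <= d * N%:R) && (i != k))
      ((Sw R u i) ^+ 2 + (Se R u i) ^+ 2) / (c i) ^+ 2.
    by rewrite sumr_ge0 // => i _; rewrite divr_ge0 ?addr_ge0 ?sqr_ge0.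
  have ck := c0 k (ltn_ord k).
  have a0 : 0 <= (Sw R u k) ^+ 2 / c k ^+ 2 by rewrite divr_ge0 ?sqr_ge0.
  have b0 : 0 <= (Se R u k) ^+ 2 / c k ^+ 2 by rewrite divr_ge0 ?sqr_ge0.
  rewrite mulrDl; case/orP: bk => h; have := indic ck h; lra.
have -> : #|E|%:R = \sum_u (u \in E)%:R :> R.
  rewrite -sum1_card natr_sum big_mkcond /=; apply: eq_bigr => u _.
  by case: (u \in E).
apply: le_trans (ler_sum _ (fun u _ => key u)) _.
rewrite exchange_big /=.
set X : R := 2 ^+ N.
have X0 : 0 < X by rewrite exprn_gt0.
set C : R := X / (eps ^+ 2 * N%:R).
have CX : C * (eps ^+ 2 * N%:R) = X.
  by rewrite /C mulrVK // unitfE mulf_neq0 // ?sqrf_eq0 gt_eqF.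
have C0 : 0 <= C by rewrite /C divr_ge0 ?ltW // mulr_gt0 // exprn_gt0.
apply: (@le_trans _ _ (\sum_(k < N | k%:R <= d * N%:R) C)).
  apply: ler_sum => k kd.
  rewrite -mulr_suml big_split /= west_sm // east_sm // -/X.
  have kN : (k <= N)%N by apply: ltnW.
  have L0 : 0 < (N - k)%:R :> R by rewrite ltr0n; have := ltn_ord k; lia.
  have hL : N%:R <= 2 * (N - k)%:R :> R.
    rewrite natrB //.
    have : d * N%:R <= N%:R / 2.
      rewrite ler_pdivlMr // /d; nra.
    lra.
  rewrite ler_pdivrMr ?exprn_gt0 ?c0 // /c.
  set L := (N - k)%:R in L0 hL *.
  rewrite -CX.
  have H : 0 <= 2 * L * C * eps ^+ 2 by apply: mulr_ge0; [apply: mulr_ge0 => //; apply: mulr_ge0; [lra|exact: ltW] | exact: sqr_ge0].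
  have := ler_wpM2l H hL.
  rewrite !exprS expr0 !mulr1.
  nra.
have -> : \sum_(k < N | k%:R <= d * N%:R) C =
    (\sum_(k < N) (if k%:R <= d * N%:R then 1 else 0)) * C.
  rewrite big_mkcond mulr_suml; apply: eq_bigr => k _.
  by case: ifP; rewrite ?mul1r ?mul0r.
have d0 : 0 <= d * N%:R by rewrite mulr_ge0 // ?ltW // /d; lra.
have [_ h] := cnt N d0.
have := ler_wpM2r C0 h.
have h2 : 2 <= eps ^+ 3 * N%:R.
  by have := NM; rewrite ler_pdivrMr // mulrC.
rewrite -CX /d.
have H3 : eps ^+ 3 = eps * eps ^+ 2 by rewrite exprS.
nra.
Qed.
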